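(* Suppose $l,m,j$ are integers with $m>0$, $|l|\le m/2$, $|j|\le m/8$. Then $$\mathbb{P}\{S_{2m}=2j+2l\mid S_{4m}=4l\}=2\sqrt{\frac{1}{2\pi m(1-(l/m)^2)}}\;\exp\Big\{-\frac{(2j)^2}{2m(1-(l/m)^2)}+O\Big(\frac1m\Big)+O\Big(\frac{j^4}{m^3}\Big)\Big\},$$ where the $O(\cdot)$ terms are bounded in absolute value by a universal constant times the indicated quantities, uniformly over all such $l,m,j$.
   Context: $S_n$ is simple random walk on $\mathbb{Z}$ started at $0$, with i.i.d. steps equal to $\pm1$ with probability $1/2$ each. *)

(* Defs.v *)
From Stdlib Require Import Reals ZArith.
From mathcomp Require Import all_boot.

Set Implicit Arguments.
Unset Strict Implicit.
Unset Printing Implicit Defensive.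

(* Simple random walk up to time n: the sample space is the set of step
   sequences w : 'I_n -> bool (true = +1, false = -1), with the uniform
   probability (i.i.d. fair +-1 steps). *)
Definition Omega (n : nat) := {ffun 'I_n -> bool}.

Definition S (n : nat) (k : nat) (w : Omega n) : Z :=
  \big[Z.add/0%Z]_(i < n | (i < k)%N) (if w i then 1%Z else (-1)%Z).

Definition Pr (n : nat) (A : pred (Omega n)) : R :=
  Rdiv (INR #|A|) (pow (IZR 2) n).

Definition CondPr (n : nat) (A B : pred (Omega n)) : R :=
  Rdiv (Pr (predI A B)) (Pr B).

#[global] Open Scope R_scope.

(* Main.v *)
Require Import Defs.
From Stdlib Require Import Reals Lra Lia ZArith.
From mathcomp Require Import all_boot zify.
From Coquelicot Require Import Coquelicot.

Definition WI (n : nat) := RInt (fun x => sin x ^ n) 0 (PI/2).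

Lemma sinpow_cont n x : continuous (fun x => sin x ^ n) x.
Proof. apply: ex_derive_continuous. auto_derive. easy. Qed.

Lemma WI_ex n : ex_RInt (fun x => sin x ^ n) 0 (PI/2).
Proof. apply: ex_RInt_continuous => z _. apply sinpow_cont. Qed.

Lemma WI_rec n : INR (n+2) * WI (n+2) = INR (n+1) * WI n.
Proof.
  set df := fun x => INR (n+2) * sin x ^ (n+2) - INR (n+1) * sin x ^ n.
  have H : is_RInt df 0 (PI/2) (minus ((fun x => - cos x * sin x ^ (n+1)) (PI/2)) ((fun x => - cos x * sin x ^ (n+1)) 0)).
  { apply: (@is_RInt_derive R_CompleteNormedModule (fun x => - cos x * sin x ^ (n+1)) df).
    - move=> x _. rewrite /df. auto_derive. easy.
      rewrite !plus_INR. rewrite -addn1 !addn2 !addn1 /= . change (INR 1) with 1; change (INR 2) with (1+1). have := sin2_cos2 x. rewrite /Rsqr => Hs. have Hc : cos x * cos x = 1 - sin x * sin x by lra. replace (- cos x * (1 * cos x * ((INR n + 1) * sin x ^ n))) with (-(cos x * cos x) * ((INR n + 1) * sin x ^ n)) by ring. rewrite Hc. ring.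
    - move=> x _. rewrite /df. apply: ex_derive_continuous. auto_derive. easy. }
  have H1 := is_RInt_minus _ _ _ _ _ _ (is_RInt_scal _ _ _ (INR (n+2)) _ (RInt_correct _ _ _ (WI_ex (n+2))))
    (is_RInt_scal _ _ _ (INR (n+1)) _ (RInt_correct _ _ _ (WI_ex n))).
  have E1 := is_RInt_unique _ _ _ _ H.
  have E2 := is_RInt_unique _ _ _ _ H1.
  rewrite /df in E1. rewrite E1 in E2. move: E2.
  rewrite /minus /plus /opp /scal /= /mult /= cos_PI2 cos_0 sin_0 pow_i; last lia.
  rewrite /WI. lra.
Qed.

Lemma WI_0 : WI 0 = PI/2.
Proof.
  rewrite /WI. rewrite (RInt_ext _ (fun _ => 1)); last by move=> x _ /=.
  rewrite RInt_const /scal /= /mult /=. lra.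
Qed.

Lemma WI_1 : WI 1 = 1.
Proof.
  rewrite /WI. apply: is_RInt_unique.
  have -> : 1 = minus ((fun x => - cos x) (PI/2)) ((fun x => - cos x) 0).
  { rewrite /minus /plus /opp /= cos_PI2 cos_0. lra. }
  apply: (@is_RInt_derive R_CompleteNormedModule (fun x => - cos x)).
  - move=> x _. auto_derive. easy. simpl. ring.
  - move=> x _. apply: ex_derive_continuous. auto_derive. easy.
Qed.

Lemma WI_decr n : WI (n.+1) <= WI n.
Proof.
  rewrite /WI. apply: RInt_le.
  - have := PI_RGT_0. lra.
  - apply WI_ex.
  - apply WI_ex.
  - move=> x Hx. have H1 := SIN_bound x. have H2 : 0 <= sin x.
    { apply: sin_ge_0; have := PI_RGT_0; lra. }
    have H3 : 0 <= sin x ^ n by apply: pow_le.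
    simpl. nra.
Qed.

Lemma INR_addn a b : INR (a + b) = INR a + INR b. Proof. exact: plus_INR. Qed.
Lemma INR_muln a b : INR (a * b) = INR a * INR b. Proof. exact: mult_INR. Qed.
Lemma INR_Sn a : INR a.+1 = INR a + 1. Proof. exact: S_INR. Qed.
Lemma INR_2 : INR 2 = 2. Proof. rewrite /=; lra. Qed.
Lemma INR_1 : INR 1 = 1. Proof. by []. Qed.
Lemma INR_0 : INR 0 = 0. Proof. by []. Qed.
Ltac inr_tac := repeat progress (rewrite ?INR_addn ?INR_muln ?INR_Sn ?INR_2 ?INR_1 ?INR_0); lra.

Fixpoint cw (n : nat) : R := match n with 0%N => 1 | k.+1 => cw k * (2 * INR k + 1) / (2 * INR k + 2) end.

Lemma cw_pos n : 0 < cw n.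
Proof.
  elim: n => [|n IH] /=; first lra.
  have := pos_INR n => H. apply: Rdiv_lt_0_compat; nra.
Qed.

Lemma WI_even_odd n : WI (2*n) = PI/2 * cw n /\ WI (2*n).+1 = 1 / ((2 * INR n + 1) * cw n).
Proof.
  elim: n => [|n [IH1 IH2]].
  - rewrite muln0 WI_0 WI_1 /=. split; field.
  - have P := pos_INR n. have C := cw_pos n.
    have E1 := WI_rec (2*n). have E2 := WI_rec (2*n).+1.
    have -> : (2 * n.+1 = 2*n + 2)%N by lia.
    have -> : ((2*n + 2).+1 = (2*n).+1 + 2)%N by lia.
    move: E1 E2. rewrite IH1 IH2. 
    have -> : INR (2*n+2) = 2 * INR n + 2 by inr_tac.
    have -> : INR (2*n+1) = 2 * INR n + 1 by inr_tac.
    have -> : INR ((2*n).+1 + 2) = 2 * INR n + 1 + 2 by inr_tac.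
    have -> : INR ((2*n).+1 + 1) = 2 * INR n + 2 by inr_tac.
    have -> : INR n.+1 = INR n + 1 by inr_tac. rewrite /=.
    move=> E1 E2. split.
    + apply: (Rmult_eq_reg_l (2 * INR n + 2)); last lra.
      rewrite E1. field. lra.
    + apply: (Rmult_eq_reg_l (2 * INR n + 1 + 2)); last lra.
      rewrite E2. field. lra.
Qed.

Lemma cw_lower n : 2 / (PI * (2 * INR n + 1)) <= cw n ^ 2.
Proof.
  have [E1 E2] := WI_even_odd n. have D := WI_decr (2*n).
  rewrite E1 E2 in D. have C := cw_pos n. have P := pos_INR n. have Pi := PI_RGT_0.
  have H : 1 <= PI/2 * cw n * ((2 * INR n + 1) * cw n).
  { have Hp : 0 < (2 * INR n + 1) * cw n by nra.
    have := Rmult_le_compat_r _ _ _ (Rlt_le _ _ Hp) D.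
    rewrite /Rdiv Rmult_1_l Rinv_l; lra. }
  apply: (Rmult_le_reg_l (PI * (2 * INR n + 1))); first nra.
  rewrite /Rdiv. field_simplify; last nra. nra.
Qed.

Lemma cw_upper n : (0 < n)%N -> cw n ^ 2 <= 1 / (PI * INR n).
Proof.
  case: n => [//|k] _.
  have [E1 E2] := WI_even_odd k.+1. have [F1 F2] := WI_even_odd k.
  have D := WI_decr (2*k).+1.
  have e : ((2*k).+2 = 2 * k.+1)%N by lia. rewrite e in D.
  rewrite E1 F2 in D. have C := cw_pos k. have P := pos_INR k. have Pi := PI_RGT_0.
  have Ek : cw k.+1 = cw k * (2 * INR k + 1) / (2 * INR k + 2) by [].
  have Hk : (2 * INR k + 1) * cw k = (2 * INR k + 2) * cw k.+1.
  { rewrite Ek. field. lra. }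
  rewrite Hk in D. have C1 := cw_pos k.+1.
  have -> : INR k.+1 = INR k + 1 by inr_tac.
  have H : PI/2 * cw k.+1 * ((2 * INR k + 2) * cw k.+1) <= 1.
  { have Hp : 0 < (2 * INR k + 2) * cw k.+1 by nra.
    have := Rmult_le_compat_r _ _ _ (Rlt_le _ _ Hp) D.
    rewrite /Rdiv Rmult_1_l Rinv_l; lra. }
  apply: (Rmult_le_reg_l (PI * (INR k + 1))); first nra.
  rewrite /Rdiv. field_simplify; last nra. nra.
Qed.

Lemma ln1p_lower u : 0 <= u -> u - u^2/2 <= ln (1+u).
Proof.
  move=> Hu. case: (Req_dec u 0) => [->|Hn].
  - rewrite Rplus_0_r ln_1. lra.
  set f := fun x => ln (1+x) - x + x^2/2.
  have [c [Ec Hc]] : exists c, f u - f 0 = (c^2/(1+c)) * (u - 0) /\ 0 < c < u.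
  { apply: (MVT_cor2 f (fun c => c^2/(1+c))); first lra.
    move=> c Hc. apply/is_derive_Reals. rewrite /f. auto_derive. lra. field. lra. }
  move: Ec. rewrite /f Rplus_0_r ln_1 => Ec.
  have : 0 <= c^2/(1+c) * (u - 0). { apply: Rmult_le_pos; last lra. apply: Rdiv_le_0_compat; nra. }
  lra.
Qed.

Lemma ln1p_upper u : 0 <= u -> ln (1+u) <= u - u^2/2 + u^3/3.
Proof.
  move=> Hu. case: (Req_dec u 0) => [->|Hn].
  - rewrite Rplus_0_r ln_1. lra.
  set f := fun x => x - x^2/2 + x^3/3 - ln (1+x).
  have [c [Ec Hc]] : exists c, f u - f 0 = (c^3/(1+c)) * (u - 0) /\ 0 < c < u.
  { apply: (MVT_cor2 f (fun c => c^3/(1+c))); first lra.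
    move=> c Hc. apply/is_derive_Reals. rewrite /f. auto_derive. lra. field. lra. }
  move: Ec. rewrite /f Rplus_0_r ln_1 => Ec.
  have : 0 <= c^3/(1+c) * (u - 0). { apply: Rmult_le_pos; last lra. apply: Rdiv_le_0_compat; nra. }
  lra.
Qed.

Lemma mvt_bound f f' u M : (forall c, Rabs c <= Rabs u -> derivable_pt_lim f c (f' c)) ->
  (forall c, Rabs c <= Rabs u -> Rabs (f' c) <= M) -> Rabs (f u - f 0) <= M * Rabs u.
Proof.
  move=> D B.
  have I : forall c, Rmin 0 u <= c <= Rmax 0 u -> Rabs c <= Rabs u.
  { move=> c; rewrite /Rmin /Rmax; case: Rle_dec => _ Hc; rewrite /Rabs; 
    repeat case: Rcase_abs; lra. }
  have [c [Ec Hc]] := MVT_abs f f' 0 u (fun c Hc => D c (I c Hc)).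
  rewrite Ec Rminus_0_r. apply: Rmult_le_compat_r; first exact: Rabs_pos.
  exact: B (I c Hc).
Qed.

Lemma ln1p_taylor3 u : Rabs u <= 1/2 -> Rabs (ln (1+u) - (u - u^2/2 + u^3/3)) <= 2 * u^4.
Proof.
  move=> Hu.
  set f := fun x => ln (1+x) - (x - x^2/2 + x^3/3).
  have -> : ln (1 + u) - (u - u ^ 2 / 2 + u ^ 3 / 3) = f u - f 0.
  { rewrite /f /= Rplus_0_r ln_1. field. }
  have -> : 2 * u^4 = (2 * Rabs u ^ 3) * Rabs u.
  { have -> : 2 * Rabs u ^ 3 * Rabs u = 2 * (Rabs u ^ 2 * Rabs u ^ 2) by ring.
    rewrite pow2_abs. ring. }
  apply: (mvt_bound f (fun c => - c^3/(1+c))).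
  - move=> c Hc. have Hc' : Rabs c <= 1/2 by lra. move/Rabs_le_between: Hc' => Hc'.
    apply/is_derive_Reals. rewrite /f. auto_derive. lra. field. lra.
  - move=> c Hc. have Hc' : Rabs c <= 1/2 by lra. move/Rabs_le_between: Hc' => Hc'.
    rewrite Rabs_div; last lra. rewrite Rabs_Ropp -RPow_abs (Rabs_pos_eq (1+c)); last lra.
    have A := Rabs_pos c.
    have P : Rabs c ^ 3 <= Rabs u ^ 3 by apply: pow_incr.
    have Q : 0 <= Rabs c ^ 3 by apply: pow_le.
    have : / (1+c) <= 2. { rewrite -(Rinv_inv 2). apply: Rinv_le_contravar; lra. }
    have : 0 < / (1 + c) by apply: Rinv_0_lt_compat; lra.
    rewrite /Rdiv. nra.
Qed.

Lemma lnle x y : 0 < x -> x <= y -> ln x <= ln y.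
Proof. move=> H1 H2. case: (Rle_lt_or_eq_dec _ _ H2) => [H|<-]; last lra.
  apply: Rlt_le. exact: ln_increasing. Qed.

Lemma INR_pos n : (0 < n)%N -> 0 < INR n.
Proof. move=> H. apply: lt_0_INR. exact/ltP. Qed.

Lemma INR_fact_pos n : 0 < INR n`!.
Proof. apply: INR_pos. exact: fact_gt0. Qed.

Definition lf (n : nat) := ln (INR n`!).
Definition dS (n : nat) := lf n - ((INR n + 1/2) * ln (INR n) - INR n).

Lemma lf_S n : lf n.+1 = lf n + ln (INR n.+1).
Proof.
  rewrite /lf factS INR_muln ln_mult; [lra | apply: INR_pos => // | exact: INR_fact_pos].
Qed.

Lemma d_step n : (0 < n)%N -> Rabs (dS n - dS n.+1) <= / 4 * (/ INR n)^2.
Proof.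
  move=> Hn. have X := INR_pos n Hn. set x := INR n in X *.
  have Hx1 : 1 <= x. { rewrite /x. have : (1 <= n)%coq_nat by apply/leP. move/le_INR. by []. }
  have E : dS n - dS n.+1 = (x + 1/2) * ln (1 + / x) - 1.
  { rewrite /dS lf_S INR_Sn -/x.
    have -> : x + 1 = x * (1 + / x) by field; lra.
    rewrite ln_mult; [|lra|]; last by have := Rinv_0_lt_compat _ X; lra.
    field. lra. }
  rewrite E. set u := / x.
  have U0 : 0 < u by apply: Rinv_0_lt_compat.
  have U1 : u <= 1. { rewrite /u -Rinv_1. apply: Rinv_le_contravar; lra. }
  have XU : x * u = 1 by rewrite /u; field; lra.
  have L1 := ln1p_lower u (Rlt_le _ _ U0). have L2 := ln1p_upper u (Rlt_le _ _ U0).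
  have A1 := Rmult_le_compat_l (x + 1/2) _ _ (ltac:(lra)) L1.
  have A2 := Rmult_le_compat_l (x + 1/2) _ _ (ltac:(lra)) L2.
  have e1 : (x + 1/2) * (u - u^2/2) = 1 - u^2/4.
  { have -> : (x + 1/2) * (u - u^2/2) = (x*u) - (x*u)*u/2 + u/2 - u^2/4 by field.
    rewrite XU. field. }
  have e2 : (x + 1/2) * (u - u^2/2 + u^3/3) = 1 - u^2/4 + u^2/3 + u^3/6.
  { have -> : (x + 1/2) * (u - u^2/2 + u^3/3) = (x*u) - (x*u)*u/2 + (x*u)*u^2/3 + u/2 - u^2/4 + u^3/6 by field.
    rewrite XU. field. }
  rewrite e1 in A1. rewrite e2 in A2.
  have U3 : u^3 <= u^2 by simpl; nra.
  apply: Rabs_le. nra.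
Qed.

Lemma d_diff_k N k : (0 < N)%N -> Rabs (dS N - dS (N + k)) <= INR k * (/ 4 * (/ INR N)^2).
Proof.
  move=> HN. have X := INR_pos N HN.
  elim: k => [|k IH].
  - rewrite addn0 Rminus_eq_0 Rabs_R0 INR_0. lra.
  - have HNk : (0 < N + k)%N by lia.
    have S1 := d_step (N + k) HNk.
    have -> : (N + k.+1 = (N + k).+1)%N by lia.
    have T := Rabs_triang (dS N - dS (N + k)) (dS (N+k) - dS (N+k).+1).
    have -> : dS N - dS (N + k).+1 = dS N - dS (N + k) + (dS (N + k) - dS (N + k).+1) by ring.
    have Y : / INR (N + k) <= / INR N.
    { apply: Rinv_le_contravar => //. rewrite INR_addn. have := pos_INR k. lra. }
    have Y0 : 0 <= / INR (N + k). { apply: Rlt_le. apply: Rinv_0_lt_compat. exact: INR_pos. }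
    have Y2 : (/ INR (N + k))^2 <= (/ INR N)^2 by apply: pow_incr.
    rewrite INR_Sn. lra.
Qed.

Lemma d_diff N : (0 < N)%N -> Rabs (dS N - dS (2 * N)) <= / 4 * / INR N.
Proof.
  move=> HN. have X := INR_pos N HN.
  have := d_diff_k N N HN. have -> : (N + N = 2 * N)%N by lia.
  have -> : INR N * (/ 4 * (/ INR N) ^ 2) = / 4 * / INR N by field; lra.
  done.
Qed.

Lemma cw_fact n : cw n = INR (2*n)`! / (4 ^ n * (INR n`!) ^ 2).
Proof.
  elim: n => [|n IH].
  - rewrite /=. field.
  - rewrite /= IH.
    have -> : (2 * n.+1 = (2*n).+2)%N by lia.
    rewrite !factS !INR_muln !INR_Sn.
    have -> : INR (2 * n) = 2 * INR n by inr_tac.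
    have := INR_fact_pos n. have := INR_fact_pos (2*n). have := pos_INR n. move=> *.
    have := pow_lt 4 n ltac:(lra). move=> *.
    field. repeat split; lra.
Qed.

Lemma stirling N : (0 < N)%N -> Rabs (dS N - ln (2 * PI) / 2) <= / 2 * / INR N.
Proof.
  move=> HN. have X := INR_pos N HN. set x := INR N in X *.
  have Hx1 : 1 <= x. { rewrite /x. have : (1 <= N)%coq_nat by apply/leP. move/le_INR. by []. }
  have Pi := PI_RGT_0.
  have C := cw_pos N.
  have Cl := cw_lower N. have Cu := cw_upper N HN. rewrite -/x in Cl Cu.
  have F1 := INR_fact_pos N. have F2 := INR_fact_pos (2*N).
  have P4 := pow_lt 4 N ltac:(lra).
  have Lc : ln (cw N) = lf (2*N) - x * (2 * ln 2) - 2 * lf N.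
  { have Q1 : 0 < 4 ^ N * INR N`! ^ 2 by have := pow_lt _ 2 F1; nra.
    have Q2 : 0 < / (4 ^ N * INR N`! ^ 2) by apply: Rinv_0_lt_compat.
    have Q3 : 0 < INR N`! ^ 2 by apply: pow_lt.
    rewrite cw_fact /Rdiv (ln_mult _ _ F2 Q2) (ln_Rinv _ Q1) (ln_mult _ _ P4 Q3).
    rewrite (ln_pow _ 2 F1) (ln_pow 4 N ltac:(lra)).
    have -> : ln 4 = 2 * ln 2. { have -> : (4 = 2 * 2)%R by lra. rewrite ln_mult; lra. }
    rewrite /lf -/x. change (INR 2) with (1+1). lra. }
  have L2N : lf (2*N) = dS (2*N) + (2*x + 1/2) * (ln 2 + ln x) - 2*x.
  { rewrite /dS. have -> : INR (2*N) = 2 * x by rewrite /x; inr_tac.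
    rewrite ln_mult; lra. }
  have LN : lf N = dS N + (x + 1/2) * ln x - x by rewrite /dS -/x; ring.
  have Lsq : ln (cw N ^ 2) = 2 * ln (cw N) by rewrite (ln_pow _ 2 C); change (INR 2) with (1+1); ring.
  have Up := lnle _ _ (pow_lt _ 2 C) Cu.
  have Q : 0 < 2 / (PI * (2*x+1)) by apply: Rdiv_lt_0_compat; nra.
  have Lo := lnle _ _ Q Cl.
  rewrite Lsq Lc L2N LN in Up Lo.
  have U0 : 0 < / (2 * x) by apply: Rinv_0_lt_compat; lra.
  have U1 : / (2 * x) <= 1. { rewrite -Rinv_1. apply: Rinv_le_contravar; lra. }
  have e1 : ln (1 / (PI * x)) = - (ln PI + ln x).
  { rewrite /Rdiv Rmult_1_l ln_Rinv; last nra. rewrite ln_mult //. }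
  have e2 : ln (2 / (PI * (2 * x + 1))) = ln 2 - (ln PI + (ln x + (ln 2 + ln (1 + / (2 * x))))).
  { have E21 : 2 * x + 1 = x * (2 * (1 + / (2 * x))) by field; lra.
    rewrite /Rdiv ln_mult; [|lra|apply: Rinv_0_lt_compat; nra].
    rewrite ln_Rinv; last nra. rewrite E21 ln_mult //; last nra.
    rewrite ln_mult //; last nra. rewrite ln_mult //; lra. }
  rewrite e1 in Up. rewrite e2 in Lo.
  have Lu := ln1p_upper _ (Rlt_le _ _ U0).
  have Lu' : ln (1 + / (2 * x)) <= / (2 * x) by simpl in Lu; nra.
  have Dd := d_diff N HN. rewrite -/x in Dd. move/Rabs_le_between: Dd => Dd.
  rewrite ln_mult //; last lra.
  have e : / (2 * x) = / 2 * / x by field; lra.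
  set L := ln (1 + / (2 * x)) in Lo Lu'.
  rewrite e in Lu'.
  apply: Rabs_le. lra.
Qed.

Lemma QA_poly (A u L1 L2 : R) : 0 < A -> Rabs u <= 1/4 ->
  Rabs (L1 - (u - u^2/2 + u^3/3)) <= 2 * u^4 ->
  Rabs (L2 - (- u - u^2/2 - u^3/3)) <= 2 * u^4 ->
  Rabs ((A + A*u + 1/2) * L1 + (A - A*u + 1/2) * L2 - A * u^2) <= 6 * (A * u^4) + u^2.
Proof.
  move=> HA Hu H1 H2.
  set e1 := L1 - (u - u^2/2 + u^3/3) in H1. set e2 := L2 - (- u - u^2/2 - u^3/3) in H2.
  have -> : (A + A*u + 1/2) * L1 + (A - A*u + 1/2) * L2 - A * u^2
     = A * (2 * u^4 / 3 + (1+u) * e1 + (1-u) * e2) + (- u^2) / 2 + (e1 + e2) / 2.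
  { rewrite /e1 /e2. field. }
  move/Rabs_le_between: Hu => Hu.
  move/Rabs_le_between: H1 => H1. move/Rabs_le_between: H2 => H2.
  have U4 : 0 <= u^4 by have := pow2_ge_0 (u^2); rewrite -pow_mult.
  have U2 : 0 <= u^2 by apply: pow2_ge_0.
  have U42 : u^4 <= u^2 / 16.
  { have -> : u^4 = u^2 * u^2 by ring. have : u^2 <= 1/16 by simpl; nra. nra. }
  have B1 : Rabs ((1+u) * e1) <= 5/4 * (2 * u^4).
  { rewrite Rabs_mult. apply: Rmult_le_compat; try apply: Rabs_pos.
    - rewrite Rabs_pos_eq; lra.
    - apply: Rabs_le; lra. }
  have B2 : Rabs ((1-u) * e2) <= 5/4 * (2 * u^4).
  { rewrite Rabs_mult. apply: Rmult_le_compat; try apply: Rabs_pos.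
    - rewrite Rabs_pos_eq; lra.
    - apply: Rabs_le; lra. }
  move/Rabs_le_between: B1 => B1. move/Rabs_le_between: B2 => B2.
  set X := 2 * u^4 / 3 + (1+u) * e1 + (1-u) * e2.
  have HX : - (6 * u^4) <= X <= 6 * u^4 by rewrite /X; lra.
  have AX : - (6 * (A * u^4)) <= A * X <= 6 * (A * u^4) by nra.
  apply: Rabs_le. lra.
Qed.

Lemma QA_bound (A J M : R) : 1 <= M -> M / 2 <= A -> Rabs J <= M / 8 ->
  Rabs ((A + J + 1/2) * ln (1 + J / A) + (A - J + 1/2) * ln (1 - J / A) - J^2 / A)
    <= 50 * (1 / M + J^4 / M^3).
Proof.
  move=> HM HA HJ.
  have A0 : 0 < A by lra.
  set u := J / A.
  have Hu : Rabs u <= 1/4.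
  { rewrite /u Rabs_div; last lra. rewrite (Rabs_pos_eq A); last lra.
    apply: (Rmult_le_reg_r A) => //. rewrite /Rdiv Rmult_assoc Rinv_l; lra. }
  have Hu2 : Rabs u <= 1/2 by lra.
  have T1 := ln1p_taylor3 u Hu2.
  have T2 := ln1p_taylor3 (- u) ltac:(rewrite Rabs_Ropp; lra).
  have -> : 1 - J / A = 1 + - u by rewrite /u; ring.
  have eJ : J = A * u by rewrite /u; field; lra.
  have T2' : Rabs (ln (1 + - u) - (- u - u^2/2 - u^3/3)) <= 2 * u^4.
  { have e : (-u - u^2/2 - u^3/3) = (-u - (-u)^2/2 + (-u)^3/3) by field.
    have e' : u^4 = (-u)^4 by ring. rewrite e e'. exact T2. }
  have -> : J^2 / A = A * u^2 by rewrite eJ; field; lra.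
  rewrite eJ.
  have Q := QA_poly A u _ _ A0 Hu T1 T2'.
  apply: (Rle_trans _ _ _ Q).
  have M0 : 0 < M by lra.
  have Au4 : A * u^4 = J^4 / A^3 by rewrite eJ; field; lra.
  have u2 : u^2 = J^2 / A^2 by rewrite eJ; field; lra.
  have iA : / A <= 2 / M.
  { have -> : 2 / M = / (M / 2) by field; lra. apply: Rinv_le_contravar; lra. }
  have iA0 : 0 < / A by apply: Rinv_0_lt_compat.
  have J2 : 0 <= J^2 by apply: pow2_ge_0.
  have J4 : 0 <= J^4 by have := pow2_ge_0 (J^2); rewrite -pow_mult.
  have B1 : J^4 / A^3 <= 8 * (J^4 / M^3).
  { rewrite /Rdiv. have -> : / A^3 = (/A)^3 by rewrite pow_inv.
    have : (/A)^3 <= (2/M)^3 by apply: pow_incr; lra.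
    have -> : (2/M)^3 = 8 * / M^3 by field; lra. nra. }
  have B2 : J^2 / A^2 <= 4 * (J^2 / M^2).
  { rewrite /Rdiv. have -> : / A^2 = (/A)^2 by rewrite pow_inv.
    have : (/A)^2 <= (2/M)^2 by apply: pow_incr; lra.
    have -> : (2/M)^2 = 4 * / M^2 by field; lra. nra. }
  have B3 : 2 * (J^2 / M^2) <= 1 / M + J^4 / M^3.
  { set z := J^2 / M.
    have -> : J^2 / M^2 = z * / M by rewrite /z; field; lra.
    have -> : J^4 / M^3 = z^2 * / M by rewrite /z; field; lra.
    have iM : 0 < / M by apply: Rinv_0_lt_compat.
    have Hz : 2 * z <= 1 + z^2. { have := pow2_ge_0 (z - 1). simpl. nra. }
    rewrite /Rdiv Rmult_1_l. nra. }
  have W0 : 0 <= J^4 / M^3 by apply: Rdiv_le_0_compat => //; apply: pow_lt.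
  rewrite -eJ Au4 u2. have : 0 <= 1 / M by apply: Rdiv_le_0_compat; lra. lra.
Qed.

Lemma INR_pos_inv n : 0 < INR n -> (0 < n)%N.
Proof. case: n => [|n] //=. lra. Qed.

Lemma lf_approx n M : 1 <= M -> 3 * M / 8 <= INR n ->
  exists d, lf n = (INR n + 1/2) * ln (INR n) - INR n + ln (2 * PI) / 2 + d /\ Rabs d <= 2 / M.
Proof.
  move=> HM Hn. have Hn0 : (0 < n)%N by apply: INR_pos_inv; lra.
  have S := stirling n Hn0. exists (dS n - ln (2 * PI) / 2). split.
  - rewrite /dS. ring.
  - apply: (Rle_trans _ _ _ S).
    have : / INR n <= / (3 * M / 8) by apply: Rinv_le_contravar; lra.
    have -> : / (3 * M / 8) = 8 / 3 * / M by field; lra.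
    have : 0 < / M by apply: Rinv_0_lt_compat; lra.
    rewrite /Rdiv. lra.
Qed.

Lemma ln_split x y : 0 < x -> 0 < x + y -> ln (x + y) = ln x + ln (1 + y / x).
Proof.
  move=> H1 H2. rewrite -ln_mult //; last first.
  { have -> : 1 + y / x = (x + y) / x by field; lra. apply: Rdiv_lt_0_compat; lra. }
  f_equal. field. lra.
Qed.

Lemma assemble (m a b p1 p2 q1 q2 : nat) (M A B J : R) :
  INR m = M -> INR a = A -> INR b = B ->
  INR p1 = A + J -> INR p2 = A - J -> INR q1 = B + J -> INR q2 = B - J ->
  A + B = 2 * M -> 1 <= M -> M / 2 <= A -> M / 2 <= B -> Rabs J <= M / 8 ->
  Rabs ((2 * lf (2*m) + lf (2*a) + lf (2*b) - lf p1 - lf p2 - lf q1 - lf q2 - lf (4*m))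
        - (ln 2 - ln (2 * PI) / 2 - (ln A + ln B - ln M) / 2 - (J^2 / A + J^2 / B)))
   <= 120 * (1 / M + J^4 / M^3).
Proof.
  move=> Hm Ha Hb Hp1 Hp2 Hq1 Hq2 HAB HM HA HB HJ.
  move/Rabs_le_between: (HJ) => HJ'.
  have [d1 [E1 D1]] := lf_approx (2*m) M HM ltac:(rewrite INR_muln ?Hm ?Ha ?Hb /=; lra).
  have [d2 [E2 D2]] := lf_approx (2*a) M HM ltac:(rewrite INR_muln ?Hm ?Ha ?Hb /=; lra).
  have [d3 [E3 D3]] := lf_approx (2*b) M HM ltac:(rewrite INR_muln ?Hm ?Ha ?Hb /=; lra).
  have [d4 [E4 D4]] := lf_approx p1 M HM ltac:(rewrite Hp1; lra).
  have [d5 [E5 D5]] := lf_approx p2 M HM ltac:(rewrite Hp2; lra).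
  have [d6 [E6 D6]] := lf_approx q1 M HM ltac:(rewrite Hq1; lra).
  have [d7 [E7 D7]] := lf_approx q2 M HM ltac:(rewrite Hq2; lra).
  have [d8 [E8 D8]] := lf_approx (4*m) M HM ltac:(rewrite INR_muln ?Hm ?Ha ?Hb /=; lra).
  rewrite E1 E2 E3 E4 E5 E6 E7 E8 Hp1 Hp2 Hq1 Hq2 !INR_muln.
  rewrite Hm Ha Hb INR_2. have -> : INR 4 = 4 by simpl; lra.
  have A0 : 0 < A by lra. have B0 : 0 < B by lra. have M0 : 0 < M by lra.
  have Pi := PI_RGT_0.
  rewrite (ln_split A J) //; last lra.
  rewrite (ln_split A (-J)) //; last lra.
  rewrite (ln_split B J) //; last lra.
  rewrite (ln_split B (-J)) //; last lra.
  have -> : 1 + - J / A = 1 - J / A by field; lra.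
  have -> : 1 + - J / B = 1 - J / B by field; lra.
  rewrite (ln_mult 2 M) ?(ln_mult 2 A) ?(ln_mult 2 B) ?(ln_mult 4 M); try lra.
  have -> : ln 4 = 2 * ln 2. { have -> : (4 = 2 * 2)%R by lra. rewrite ln_mult; lra. }
  have QA := QA_bound A J M HM HA HJ.
  have QB := QA_bound B J M HM HB HJ.
  set LA1 := ln (1 + J / A) in QA *. set LA2 := ln (1 - J / A) in QA *.
  set LB1 := ln (1 + J / B) in QB *. set LB2 := ln (1 - J / B) in QB *.
  set QAe := (A + J + 1 / 2) * LA1 + (A - J + 1 / 2) * LA2 - J ^ 2 / A in QA.
  set QBe := (B + J + 1 / 2) * LB1 + (B - J + 1 / 2) * LB2 - J ^ 2 / B in QB.
  match goal with |- Rabs ?X <= _ => 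
    have -> : X = (2*d1 + d2 + d3 - d4 - d5 - d6 - d7 - d8) - QAe - QBe + (2*A + 2*B - 4*M) * ln 2 
      by rewrite /QAe /QBe; field; lra end.
  have -> : 2*A + 2*B - 4*M = 0 by lra.
  rewrite Rmult_0_l Rplus_0_r.
  move/Rabs_le_between: QA => QA. move/Rabs_le_between: QB => QB.
  move/Rabs_le_between: D1 => D1. move/Rabs_le_between: D2 => D2.
  move/Rabs_le_between: D3 => D3. move/Rabs_le_between: D4 => D4.
  move/Rabs_le_between: D5 => D5. move/Rabs_le_between: D6 => D6.
  move/Rabs_le_between: D7 => D7. move/Rabs_le_between: D8 => D8.
  have W0 : 0 <= J^4 / M^3.
  { apply: Rdiv_le_0_compat; last by apply: pow_lt.
    have := pow2_ge_0 (J^2); rewrite -pow_mult. done. }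
  have e2M : 2 / M = 2 * (1 / M) by field; lra. rewrite e2M in D1 D2 D3 D4 D5 D6 D7 D8.
  apply: Rabs_le. lra.
Qed.

Lemma count_card (T : finType) (P : pred T) : count P (index_enum T) = #|[set x | P x]|.
Proof. by rewrite cardsE cardE /enum_mem size_filter [index_enum T]unlock. Qed.

Lemma bigZ_count (T : Type) (r : seq T) (P w : pred T) :
  \big[Z.add/0%Z]_(i <- r | P i) (if w i then 1%Z else (-1)%Z)
  = (2 * Z.of_nat (count (predI P w) r) - Z.of_nat (count P r))%Z.
Proof.
  elim: r => [|x r IH]; first by rewrite big_nil.
  have c1 : count (predI P w) (x::r) = ((P x && w x) + count (predI P w) r)%N by [].
  have c2 : count P (x::r) = (P x + count P r)%N by [].
  rewrite big_cons IH c1 c2. move: (count (predI P w) r) (count P r) => a b.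
  case: (P x); case: (w x); cbn [andb nat_of_bool]; lia.
Qed.

Lemma S_card n k (w : Omega n) :
  S k w = (2 * Z.of_nat #|[set i : 'I_n | (i < k)%N && w i]| - Z.of_nat #|[set i : 'I_n | (i < k)%N]|)%Z.
Proof. by rewrite /S bigZ_count !count_card. Qed.

Lemma card_lt n k : (k <= n)%N -> #|[set i : 'I_n | (i < k)%N]| = k.
Proof.
  move=> H.
  have -> : [set i : 'I_n | (i < k)%N] = [set widen_ord H j | j in [set: 'I_k]].
  { apply/setP => i; rewrite inE; apply/idP/imsetP.
    - move=> Hi. exists (Ordinal Hi); first by rewrite inE. by apply: val_inj.
    - by case=> j _ ->; rewrite /= ltn_ord. }
  rewrite card_imset; last by move=> a b /(congr1 val) /= /val_inj.
  by rewrite cardsT card_ord.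
Qed.

Lemma card_split (T : finType) (F : {set T}) p q :
  #|[set A : {set T} | (#|A :&: F| == p) && (#|A :&: ~: F| == q)]| = ('C(#|F|, p) * 'C(#|~: F|, q))%N.
Proof.
  set S1 := [set X : {set T} | X \subset F & #|X| == p].
  set S2 := [set Y : {set T} | Y \subset ~: F & #|Y| == q].
  set g := fun A : {set T} => (A :&: F, A :&: ~: F).
  have -> : [set A : {set T} | (#|A :&: F| == p) && (#|A :&: ~: F| == q)] = g @^-1: setX S1 S2.
  { apply/setP => A; rewrite !inE /g /= !subsetIr. by []. }
  rewrite on_card_preimset; first by rewrite cardsX !cards_draws.
  exists (fun XY => XY.1 :|: XY.2).
  - move=> A _. by rewrite /g /= -setDE setID.
  - case=> X Y; rewrite inE /S1 /S2 !inE => /andP [/andP [HX _] /andP [HY _]].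
    rewrite /g /=. congr pair; apply/setP => i; rewrite !inE.
    + move/subsetP: HX => /(_ i). move/subsetP: HY => /(_ i). rewrite !inE.
      case: (i \in X); case: (i \in Y); case: (i \in F) => //=; move=> H1 H2; 
      (try by move: (H1 isT)); (try by move: (H2 isT)).
    + move/subsetP: HX => /(_ i). move/subsetP: HY => /(_ i). rewrite !inE.
      case: (i \in X); case: (i \in Y); case: (i \in F) => //=; move=> H1 H2; 
      (try by move: (H1 isT)); (try by move: (H2 isT)).
Qed.

Definition fset_of n (w : Omega n) : {set 'I_n} := [set i | w i].
Arguments fset_of {n}.

Lemma card_omega n (P : pred (Omega n)) (R : pred {set 'I_n}) :
  (forall w, P w = R (fset_of w)) -> #|P| = #|[set A | R A]|.
Proof.
  move=> HP.
  have -> : #|P| = #|fset_of @^-1: [set A | R A]|.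
  { apply: eq_card => w. rewrite !inE -HP. by []. }
  apply: on_card_preimset. apply: onW_bij.
  exists (fun A : {set 'I_n} => [ffun i => i \in A] : Omega n).
  - move=> w. apply/ffunP => i. by rewrite ffunE /fset_of inE.
  - move=> A. apply/setP => i. by rewrite /fset_of inE ffunE.
Qed.

Lemma S_half m (w : Omega (4 * m)) :
  S (2 * m) w = (2 * Z.of_nat #|fset_of w :&: [set i : 'I_(4*m) | (i < 2 * m)%N]| - Z.of_nat (2 * m))%Z.
Proof.
  rewrite S_card card_lt; last lia.
  have -> : [set i : 'I_(4*m) | (i < 2 * m)%N && w i] = fset_of w :&: [set i : 'I_(4*m) | (i < 2 * m)%N].
  { apply/setP => i; by rewrite !inE andbC. }
  by [].
Qed.

Lemma S_full m (w : Omega (4 * m)) :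
  S (4 * m) w = (2 * Z.of_nat #|fset_of w| - Z.of_nat (4 * m))%Z.
Proof.
  rewrite S_card card_lt; last lia.
  have -> : [set i : 'I_(4*m) | (i < 4 * m)%N && w i] = fset_of w.
  { apply/setP => i; by rewrite !inE ltn_ord. }
  by [].
Qed.

Lemma condpr_eq m (l j : Z) p1 p2 :
  Z.of_nat p1 = (Z.of_nat m + l + j)%Z -> Z.of_nat p2 = (Z.of_nat m + l - j)%Z ->
  (p1 + p2 <= 4 * m)%N ->
  CondPr (fun w : Omega (4 * m) => (S (2 * m) w =? 2 * j + 2 * l)%Z)
         (fun w : Omega (4 * m) => (S (4 * m) w =? 4 * l)%Z)
  = INR ('C(2 * m, p1) * 'C(2 * m, p2)) / INR ('C(4 * m, p1 + p2)).
Proof.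
  move=> H1 H2 Hle.
  set F := [set i : 'I_(4*m) | (i < 2 * m)%N].
  have CF : #|F| = (2 * m)%N by rewrite card_lt; lia.
  have CFc : #|~: F| = (2 * m)%N.
  { have := cardsC F. rewrite card_ord CF. lia. }
  have Csplit : forall A : {set 'I_(4*m)}, #|A| = (#|A :&: F| + #|A :&: ~: F|)%N.
  { move=> A. by rewrite -(cardsID F A) setDE. }
  have E1 : #|predI (fun w : Omega (4 * m) => (S (2 * m) w =? 2 * j + 2 * l)%Z)
         (fun w : Omega (4 * m) => (S (4 * m) w =? 4 * l)%Z)| = ('C(2 * m, p1) * 'C(2 * m, p2))%N.
  { rewrite (@card_omega _ _ (fun A => (#|A :&: F| == p1) && (#|A :&: ~: F| == p2))).
    - by rewrite card_split CF CFc.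
    - move=> w. change (((S (2*m) w =? 2*j+2*l)%Z && (S (4*m) w =? 4*l)%Z) = ((#|fset_of w :&: F| == p1) && (#|fset_of w :&: ~: F| == p2))).
      rewrite S_half S_full -/F (Csplit (fset_of w)).
      move: (#|fset_of w :&: F|) (#|fset_of w :&: ~: F|) => x y.
      apply/idP/idP.
      + move=> /andP [/Z.eqb_spec e1 /Z.eqb_spec e2]. apply/andP; split; apply/eqP; lia.
      + move=> /andP [/eqP e1 /eqP e2]. apply/andP; split; apply/Z.eqb_spec; lia. }
  have E2 : #|(fun w : Omega (4 * m) => (S (4 * m) w =? 4 * l)%Z)| = 'C(4 * m, p1 + p2).
  { rewrite (@card_omega _ _ (fun A => #|A| == (p1 + p2)%N)).
    - by rewrite card_draws card_ord.
    - move=> w. rewrite S_full. apply/idP/idP.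
      + move=> /Z.eqb_spec e. apply/eqP; lia.
      + move=> /eqP e. apply/Z.eqb_spec; lia. }
  rewrite /CondPr /Pr E1 E2. field. split.
  - apply/not_0_INR. apply/eqP. by rewrite -lt0n bin_gt0.
  - apply: pow_nonzero. lra.
Qed.

Lemma INR_ofZ (n : nat) (z : Z) : Z.of_nat n = z -> INR n = IZR z.
Proof. move=> <-. exact: INR_IZR_INZ. Qed.

Lemma ln_bin n k : (k <= n)%N -> ln (INR 'C(n, k)) = lf n - lf k - lf (n - k).
Proof.
  move=> H. have E := bin_fact H.
  have P1 := INR_fact_pos k. have P2 := INR_fact_pos (n - k).
  have Pc : 0 < INR 'C(n, k) by apply: INR_pos; rewrite bin_gt0.
  rewrite /lf -E !INR_muln !ln_mult //; nra.
Qed.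

Lemma ln_sqrt' y : 0 < y -> ln (sqrt y) = ln y / 2.
Proof.
  move=> H. have S0 := sqrt_lt_R0 _ H.
  have : ln (sqrt y * sqrt y) = ln y by rewrite sqrt_sqrt //; lra.
  rewrite ln_mult //. lra.
Qed.

Theorem lemma6 :
  exists C : R, (0 < C) /\
  forall (l j : Z) (m : nat), (0 < m)%N ->
    (2 * Z.abs l <= Z.of_nat m)%Z -> (8 * Z.abs j <= Z.of_nat m)%Z ->
    exists E : R,
      (Rabs E <= C * (1 / INR m + IZR j ^ 4 / INR m ^ 3)) /\
      CondPr (fun w : Omega (4 * m) => (S (2 * m) w =? 2 * j + 2 * l)%Z)
             (fun w : Omega (4 * m) => (S (4 * m) w =? 4 * l)%Z)
      = (2 * sqrt (1 / (2 * PI * INR m * (1 - (IZR l / INR m) ^ 2)))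
           * exp (- (2 * IZR j) ^ 2 / (2 * INR m * (1 - (IZR l / INR m) ^ 2)) + E)).
Proof.
  exists 120. split; first lra.
  move=> l j m Hm Hl Hj.
  set a := Z.to_nat (Z.of_nat m + l). set b := Z.to_nat (Z.of_nat m - l).
  set p1 := Z.to_nat (Z.of_nat m + l + j). set p2 := Z.to_nat (Z.of_nat m + l - j).
  set q1 := Z.to_nat (Z.of_nat m - l + j). set q2 := Z.to_nat (Z.of_nat m - l - j).
  have Hp1 : Z.of_nat p1 = (Z.of_nat m + l + j)%Z by rewrite /p1; lia.
  have Hp2 : Z.of_nat p2 = (Z.of_nat m + l - j)%Z by rewrite /p2; lia.
  have Hq1 : Z.of_nat q1 = (Z.of_nat m - l + j)%Z by rewrite /q1; lia.
  have Hq2 : Z.of_nat q2 = (Z.of_nat m - l - j)%Z by rewrite /q2; lia.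
  have Ha : Z.of_nat a = (Z.of_nat m + l)%Z by rewrite /a; lia.
  have Hb : Z.of_nat b = (Z.of_nat m - l)%Z by rewrite /b; lia.
  have CP := condpr_eq m l j p1 p2 Hp1 Hp2 ltac:(lia).
  rewrite CP.
  have C1 := ln_bin (2*m) p1 ltac:(lia). have C2 := ln_bin (2*m) p2 ltac:(lia).
  have C3 := ln_bin (4*m) (p1+p2) ltac:(lia).
  have e1 : (2 * m - p1 = q2)%N by lia. have e2 : (2 * m - p2 = q1)%N by lia.
  have e3 : (p1 + p2 = 2 * a)%N by lia. have e4 : (4 * m - (p1 + p2) = 2 * b)%N by lia.
  rewrite e1 in C1. rewrite e2 in C2. rewrite e4 e3 in C3. rewrite e3.
  set M := INR m. set L := IZR l. set Jr := IZR j.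
  have IM : INR m = M by [].
  have Ia : INR a = M + L by rewrite (INR_ofZ _ _ Ha) plus_IZR -INR_IZR_INZ.
  have Ib : INR b = M - L by rewrite (INR_ofZ _ _ Hb) minus_IZR -INR_IZR_INZ.
  have Ip1 : INR p1 = (M + L) + Jr by rewrite (INR_ofZ _ _ Hp1) !plus_IZR -INR_IZR_INZ.
  have Ip2 : INR p2 = (M + L) - Jr by rewrite (INR_ofZ _ _ Hp2) minus_IZR plus_IZR -INR_IZR_INZ.
  have Iq1 : INR q1 = (M - L) + Jr by rewrite (INR_ofZ _ _ Hq1) plus_IZR minus_IZR -INR_IZR_INZ.
  have Iq2 : INR q2 = (M - L) - Jr by rewrite (INR_ofZ _ _ Hq2) !minus_IZR -INR_IZR_INZ.
  have HM1 : 1 <= M. { rewrite /M. have : (1 <= m)%coq_nat by apply/leP. move/le_INR. by []. }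
  have HL : 2 * Rabs L <= M.
  { have := IZR_le _ _ Hl. rewrite mult_IZR -Rabs_Zabs -INR_IZR_INZ. by []. }
  have HJ : Rabs Jr <= M / 8.
  { have := IZR_le _ _ Hj. rewrite mult_IZR -Rabs_Zabs -INR_IZR_INZ -/Jr -/M. lra. }
  have HL' : - (M / 2) <= L <= M / 2. { apply/Rabs_le_between. lra. }
  have HA : M / 2 <= M + L by lra.
  have HB : M / 2 <= M - L by lra.
  have AS := assemble m a b p1 p2 q1 q2 M (M + L) (M - L) Jr IM Ia Ib Ip1 Ip2 Iq1 Iq2
     ltac:(lra) HM1 HA HB HJ.
  have Pc1 : 0 < INR 'C(2 * m, p1) by apply: INR_pos; rewrite bin_gt0; lia.
  have Pc2 : 0 < INR 'C(2 * m, p2) by apply: INR_pos; rewrite bin_gt0; lia.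
  have Pc3 : 0 < INR 'C(4 * m, 2 * a) by apply: INR_pos; rewrite bin_gt0; lia.
  set CPv := INR ('C(2 * m, p1) * 'C(2 * m, p2)) / INR 'C(4 * m, 2 * a).
  have CPpos : 0 < CPv by rewrite /CPv INR_muln; apply: Rdiv_lt_0_compat => //; nra.
  have lnCP : ln CPv = 2 * lf (2 * m) + lf (2 * a) + lf (2 * b) - lf p1 - lf p2 - lf q1 - lf q2 - lf (4 * m).
  { rewrite /CPv INR_muln /Rdiv ln_mult; [|nra|by apply: Rinv_0_lt_compat].
    rewrite ln_mult // ln_Rinv // C1 C2 C3. ring. }
  have M0 : 0 < M by lra.
  have Pi := PI_RGT_0.
  have eK : 2 * PI * M * (1 - (L / M) ^ 2) = (2 * PI) * (M + L) * (M - L) * / M by field; lra.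
  set K := 2 * PI * M * (1 - (L / M) ^ 2).
  have P1 : 0 < 2 * PI by lra.
  have P2 : 0 < 2 * PI * (M + L) by apply: Rmult_lt_0_compat; lra.
  have P3 : 0 < 2 * PI * (M + L) * (M - L) by apply: Rmult_lt_0_compat; lra.
  have IM0 := Rinv_0_lt_compat _ M0.
  have K0 : 0 < K by rewrite /K eK; apply: Rmult_lt_0_compat.
  set pref := 2 * sqrt (1 / K).
  have pref0 : 0 < pref by rewrite /pref; have := sqrt_lt_R0 (1 / K) ltac:(apply: Rdiv_lt_0_compat; lra); lra.
  have lnK : ln K = ln (2 * PI) + ln (M + L) + ln (M - L) - ln M.
  { rewrite /K eK ln_mult // ln_Rinv //.
    rewrite (ln_mult _ _ P2); last lra. rewrite (ln_mult _ _ P1); last lra. ring. }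
  have lnpref : ln pref = ln 2 - ln K / 2.
  { rewrite /pref ln_mult; [|lra|apply: sqrt_lt_R0; apply: Rdiv_lt_0_compat; lra].
    rewrite ln_sqrt'; last by apply: Rdiv_lt_0_compat; lra.
    rewrite /Rdiv Rmult_1_l ln_Rinv //. lra. }
  have eX : (2 * Jr) ^ 2 / (2 * M * (1 - (L / M) ^ 2)) = Jr ^ 2 / (M + L) + Jr ^ 2 / (M - L).
  { field. have : M ^ 2 - L ^ 2 = (M - L) * (M + L) by ring. have : 0 < (M - L) * (M + L) by apply: Rmult_lt_0_compat; lra. move=> *. repeat split; lra. }
  exists (ln CPv - ln pref + (2 * Jr) ^ 2 / (2 * M * (1 - (L / M) ^ 2))).
  split.
  - rewrite lnCP lnpref lnK eX. move: AS.
    have -> : (1 / M) = 1 / INR m by []. 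
    set U := (X in Rabs X <= _ -> _). set V := (X in _ -> Rabs X <= _).
    have -> : U = V by rewrite /U /V; field; repeat split; lra.
    done.
  - have -> : - (2 * Jr) ^ 2 / (2 * M * (1 - (L / M) ^ 2)) + (ln CPv - ln pref + (2 * Jr) ^ 2 / (2 * M * (1 - (L / M) ^ 2))) = ln CPv - ln pref.
    { rewrite /Rdiv. ring. }
    rewrite /Rminus exp_plus exp_Ropp exp_ln // exp_ln //. field. lra.
Qed.
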